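(* There exists an instance with three agents $N=\{1,2,3\}$, a finite set of items $A$, and additive valuations with externalities $V_i(j,a)$ for which no complete allocation is EFX.
   Context: Setting: agents $N$, finite item set $A$. An allocation $\pi=(\pi_1,\dots,\pi_n)$ consists of pairwise disjoint bundles $\pi_i\subseteq A$; it is complete if the union is $A$. $\pi(a)$ is the agent receiving item $a$. $V_i(j,a)\in\mathbb{R}$ is the value agent $i$ gets when item $a$ is given to agent $j$, and $V_i(\pi)=\sum_{a\text{ assigned in }\pi}V_i(\pi(a),a)$. $\pi^{i\leftrightarrow j}$ denotes $\pi$ with the bundles of $i$ and $j$ swapped. Agent $i$ envies $j$ if $V_i(\pi^{i\leftrightarrow j})>V_i(\pi)$. An allocation $\pi$ is EFX if for all $i,j$ such that $i$ envies $j$, for every item $a\in A$, with $\lambda$ defined by $\lambda_\ell=\pi_\ell\setminus\{a\}$ for all $\ell$: whenever $V_i(\lambda)-V_i(\lambda^{i\leftrightarrow j})>V_i(\pi)-V_i(\pi^{i\leftrightarrow j})$, we have $V_i(\lambda)\ge V_i(\lambda^{i\leftrightarrow j})$. *)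

(* Defs.v *)
From HB Require Import structures.
From mathcomp Require Import all_boot all_order all_algebra.
From mathcomp Require Import reals.
Set Implicit Arguments. Unset Strict Implicit. Unset Printing Implicit Defensive.
Import Order.TTheory GRing.Theory Num.Theory.
Local Open Scope ring_scope.

(* An allocation of items A to agents 'I_n: each item is given to at most one
   agent (Some j) or unassigned (None).  Bundles pi_j = [set a | pi a == Some j]
   are thus pairwise disjoint by construction. *)
Definition alloc (n : nat) (A : finType) := A -> option 'I_n.

Definition bundle n (A : finType) (pi : alloc n A) (j : 'I_n) : {set A} :=
  [set a | pi a == Some j].

Definition complete n (A : finType) (pi : alloc n A) : Prop :=
  forall a, exists j, pi a = Some j.

(* V i j a : value for agent i when item a is given to agent j *)
Definition value (R : realType) n (A : finType) (V : 'I_n -> 'I_n -> A -> R)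
  (i : 'I_n) (pi : alloc n A) : R :=
  \sum_(a : A) match pi a with Some j => V i j a | None => 0 end.

Definition swap_agent n (i j k : 'I_n) : 'I_n :=
  if k == i then j else if k == j then i else k.
Definition swap n (A : finType) (pi : alloc n A) (i j : 'I_n) : alloc n A :=
  fun a => omap (swap_agent i j) (pi a).

Definition remove n (A : finType) (pi : alloc n A) (a : A) : alloc n A :=
  fun b => if b == a then None else pi b.

Definition envies (R : realType) n (A : finType) (V : 'I_n -> 'I_n -> A -> R)
  (pi : alloc n A) (i j : 'I_n) : Prop :=
  value V i (swap pi i j) > value V i pi.

Definition EFX (R : realType) n (A : finType) (V : 'I_n -> 'I_n -> A -> R)
  (pi : alloc n A) : Prop :=
  forall i j : 'I_n, envies V pi i j ->
  forall a : A,
    let lam := remove pi a in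
    value V i lam - value V i (swap lam i j) > value V i pi - value V i (swap pi i j) ->
    value V i lam >= value V i (swap lam i j).

(* Main.v *)
Require Import Defs.
From mathcomp Require Import all_boot all_order all_algebra reals.
From Stdlib Require Import FunctionalExtensionality.
Import Order.TTheory GRing.Theory Num.Theory.
Local Open Scope ring_scope.

Definition cW (i j a : nat) : int :=
  match i, j, a with
  | 0, 1, 0 => 4 | 0, 1, 1 => -2 | 0, 1, _ => -5
  | 0, 2, 0 => 1 | 0, 2, 1 => 4 | 0, 2, _ => 2
  | 1, 0, 0 => 4 | 1, 0, 1 => -4 | 1, 0, _ => 1
  | 1, 2, 0 => 3 | 1, 2, 1 => 1 | 1, 2, _ => -5
  | 2, 0, 0 => 3 | 2, 0, 1 => 4 | 2, 0, _ => -1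
  | 2, 1, 0 => 3 | 2, 1, 1 => 4 | 2, 1, _ => 1
  | _, _, _ => 0 end.
Definition W (i j a : 'I_3) : int := - cW i j a.

Definition o0 : 'I_3 := @Ordinal 3 0 isT.
Definition o1 : 'I_3 := @Ordinal 3 1 isT.
Definition o2 : 'I_3 := @Ordinal 3 2 isT.
Definition ords := [:: o0; o1; o2].

Definition term (i : 'I_3) (pi : alloc 3 'I_3) (a : 'I_3) : int :=
  match pi a with Some j => W i j a | None => 0 end.

Definition vZ (i : 'I_3) (pi : alloc 3 'I_3) : int :=
  term i pi o0 + term i pi o1 + term i pi o2.

Lemma sum3 (F : 'I_3 -> int) : \sum_(a : 'I_3) F a = F o0 + F o1 + F o2.
Proof.
rewrite !big_ord_recl big_ord0 addr0 addrA.
congr (F _ + F _ + F _); exact: val_inj.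
Qed.

Lemma valueE (R : realType) i pi :
  value (fun i j a => (W i j a)%:~R : R) i pi = (vZ i pi)%:~R.
Proof.
rewrite /value /vZ -sum3 rmorph_sum; apply: eq_bigr => a _; rewrite /term; by case: (pi a).
Qed.

Definition pig (x0 x1 x2 : 'I_3) : alloc 3 'I_3 :=
  fun a => Some (match val a with 0 => x0 | 1 => x1 | _ => x2 end).

Definition badc (pi : alloc 3 'I_3) i j a : bool :=
    [&& vZ i pi < vZ i (swap pi i j),
        vZ i pi - vZ i (swap pi i j) < vZ i (remove pi a) - vZ i (swap (remove pi a) i j) &
        vZ i (remove pi a) < vZ i (swap (remove pi a) i j)].

Definition badb (pi : alloc 3 'I_3) : bool :=
  has (fun i => has (fun j => has (fun a => badc pi i j a) ords) ords) ords.
Lemma allbad : all (fun x0 => all (fun x1 => all (fun x2 => badb (pig x0 x1 x2)) ords) ords) ords.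
Proof. vm_compute. reflexivity. Qed.

Lemma mem_ords (x : 'I_3) : x \in ords.
Proof. by case: x => [[|[|[|n]]] Hn]. Qed.

Theorem theorem2 (R : realType) :
  exists (A : finType) (V : 'I_3 -> 'I_3 -> A -> R),
    forall pi : alloc 3 A, complete pi -> ~ EFX V pi.
Proof.
exists ('I_3 : finType), (fun i j a => (W i j a)%:~R).
move=> pi Hc.
have Hpi : pi = pig (odflt o0 (pi o0)) (odflt o0 (pi o1)) (odflt o0 (pi o2)).
  apply: functional_extensionality => a.
  have Hs : forall b, pi b = Some (odflt o0 (pi b)).
    by move=> b; case: (Hc b) => j ->.
  rewrite /pig; case: a => [[|[|[|n]]] Hn] //.
  - by rewrite -(_ : o0 = Ordinal Hn); [exact: Hs | apply: val_inj].
  - by rewrite -(_ : o1 = Ordinal Hn); [exact: Hs | apply: val_inj].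
  - by rewrite -(_ : o2 = Ordinal Hn); [exact: Hs | apply: val_inj].
have := allbad.
move/allP/(_ _ (mem_ords (odflt o0 (pi o0)))).
move/allP/(_ _ (mem_ords (odflt o0 (pi o1)))).
move/allP/(_ _ (mem_ords (odflt o0 (pi o2)))).
rewrite -Hpi => /hasP [i _ /hasP [j _ /hasP [a _]]].
move=> /and3P [h1 h2 h3] Hefx.
have := Hefx i j.
rewrite /envies !valueE ltr_int => /(_ h1 a).
cbv zeta; rewrite !valueE -!rmorphB ltr_int ler_int => /(_ h2).
by rewrite leNgt h3.
Qed.
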